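(* Let $n\geq 2$ and let $X$ be any finite subset of $\mathbb{R}^n$. Then there is a polynomial function $P:\mathbb{R}^n\rightarrow \mathbb{R}$ which has a local minimum at every point of $X$ and has no critical points other than the points of $X$. *)

(* Defs.v *)
From mathcomp Require Import all_boot all_algebra.
From mathcomp Require Import reals.
From mathcomp Require Import mpoly.
Set Implicit Arguments. Unset Strict Implicit. Unset Printing Implicit Defensive.
Import GRing.Theory Num.Theory.
Local Open Scope ring_scope.

(* Points of R^n are row vectors 'rV[R]_n; polynomial functions R^n -> R are
   (evaluations of) multivariate polynomials {mpoly R[n]}. *)

Definition peval (R : realType) (n : nat) (P : {mpoly R[n]}) (x : 'rV[R]_n) : R :=
  P.@[fun i => x ord0 i].

Definition sqdist (R : realType) (n : nat) (x y : 'rV[R]_n) : R :=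
  \sum_(i < n) (y ord0 i - x ord0 i) ^+ 2.

Definition is_local_min (R : realType) (n : nat) (P : {mpoly R[n]}) (x : 'rV[R]_n) : Prop :=
  exists2 e : R, 0 < e & forall y : 'rV[R]_n, sqdist x y < e -> peval P x <= peval P y.

(* x is a critical point of P: all partial derivatives of P vanish at x
   (for polynomials the partial derivatives are the formal ones, mderiv) *)
Definition is_critical (R : realType) (n : nat) (P : {mpoly R[n]}) (x : 'rV[R]_n) : Prop :=
  forall i : 'I_n, peval (mderiv i P) x = 0.

(* Main.v *)
Require Import Defs.
From mathcomp Require Import all_boot all_algebra.
From mathcomp Require Import reals.
From mathcomp Require Import mpoly.
From mathcomp Require Import polyrcf.
From mathcomp Require Import ring lra.
Import mathcomp.order.order.Order.TTheory GRing.Theory Num.Theory.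
Local Open Scope ring_scope.
Set Implicit Arguments. Unset Strict Implicit.

Section Calc.
Variables (R : realType) (n : nat).
Implicit Types (P Q : {mpoly R[n]}) (x : 'rV[R]_n).

Definition dv x i P := peval (mderiv i P) x.

Lemma pevalD x P Q : peval (P + Q) x = peval P x + peval Q x.
Proof. by rewrite /peval mevalD. Qed.
Lemma pevalB x P Q : peval (P - Q) x = peval P x - peval Q x.
Proof. by rewrite /peval mevalB. Qed.
Lemma pevalM x P Q : peval (P * Q) x = peval P x * peval Q x.
Proof. by rewrite /peval mevalM. Qed.
Lemma pevalC x c : peval c%:MP x = c.
Proof. by rewrite /peval mevalC. Qed.
Lemma pevalXi x i : peval 'X_i x = x ord0 i.
Proof. by rewrite /peval mevalXU. Qed.
Lemma pevalZ x c P : peval (c *: P) x = c * peval P x.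
Proof. by rewrite /peval mevalZ. Qed.
Lemma pevalX2 x P : peval (P ^+ 2) x = (peval P x) ^+ 2.
Proof. by rewrite !expr2 pevalM. Qed.
Lemma peval_sum x (I : Type) (r : seq I) (Pr : pred I) (F : I -> {mpoly R[n]}) :
  peval (\sum_(i <- r | Pr i) F i) x = \sum_(i <- r | Pr i) peval (F i) x.
Proof. by rewrite /peval raddf_sum. Qed.

Lemma dvD x i P Q : dv x i (P + Q) = dv x i P + dv x i Q.
Proof. by rewrite /dv mderivD pevalD. Qed.
Lemma dvB x i P Q : dv x i (P - Q) = dv x i P - dv x i Q.
Proof. by rewrite /dv mderivB pevalB. Qed.
Lemma dvM x i P Q : dv x i (P * Q) = dv x i P * peval Q x + peval P x * dv x i Q.
Proof. by rewrite /dv mderivM pevalD !pevalM. Qed.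
Lemma dvX2 x i P : dv x i (P ^+ 2) = 2 * peval P x * dv x i P.
Proof. rewrite expr2 dvM; ring. Qed.
Lemma dvC x i c : dv x i c%:MP = 0.
Proof. by rewrite /dv mderivC pevalC. Qed.
Lemma dvZ x i c P : dv x i (c *: P) = c * dv x i P.
Proof. by rewrite /dv mderivZ pevalZ. Qed.
Lemma dvXi x i j : dv x i 'X_j = (j == i)%:R.
Proof.
rewrite /dv mderivX mnm1E; case: eqP => [->|_]; last by rewrite scale0r /peval meval0.
have -> : (U_(i) - U_(i))%MM = 0%MM by apply/mnmP => k; rewrite mnmBE mnm0E subnn.
by rewrite scale1r /peval mpolyX0 meval1.
Qed.
Lemma dv_sum x i (I : Type) (r : seq I) (Pr : pred I) (F : I -> {mpoly R[n]}) :
  dv x i (\sum_(k <- r | Pr k) F k) = \sum_(k <- r | Pr k) dv x i (F k).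
Proof. by rewrite /dv raddf_sum peval_sum. Qed.

Variable c : R.
Definition Ul : {mpoly R[n]} := \sum_(i < n) (c ^+ i) *: 'X_i.
Definition lam x : R := \sum_(i < n) c ^+ i * x ord0 i.
Definition mcomp (p : {poly R}) : {mpoly R[n]} := (map_poly (@mpolyC n R) p).[Ul].

Lemma peval_Ul x : peval Ul x = lam x.
Proof. by rewrite peval_sum; apply: eq_bigr => i _; rewrite pevalZ pevalXi. Qed.

Lemma dv_Ul x i : dv x i Ul = c ^+ i.
Proof.
rewrite dv_sum (bigD1 i) //= dvZ dvXi eqxx mulr1 big1 ?addr0 // => j /negPf ji.
by rewrite dvZ dvXi ji mulr0.
Qed.

Lemma peval_comp x p : peval (mcomp p) x = p.[lam x].
Proof.
rewrite /mcomp; elim/poly_ind: p => [|p a IH].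
  by rewrite map_poly0 !horner0 /peval meval0.
rewrite rmorphD rmorphM /= map_polyX map_polyC /= !hornerMXaddC pevalD pevalM.
by rewrite IH peval_Ul pevalC.
Qed.

Lemma dv_comp x i p : dv x i (mcomp p) = p^`().[lam x] * c ^+ i.
Proof.
rewrite /mcomp; elim/poly_ind: p => [|p a IH].
  by rewrite map_poly0 !horner0 deriv0 horner0 mul0r /dv mderiv0 /peval meval0.
rewrite rmorphD rmorphM /= map_polyX map_polyC /= !hornerMXaddC dvD dvM dvC.
rewrite IH dv_Ul derivMXaddC hornerD hornerMX -/(mcomp p) peval_comp peval_Ul; ring.
Qed.
End Calc.


Section Grad.
Variables (R : realType) (n : nat) (c : R) (q : {poly R}) (s r : 'I_n -> {poly R}).
Implicit Types (x : 'rV[R]_n).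
Local Notation mcomp := (@mcomp R n c).
Local Notation lam := (@lam R n c).

Definition Bt i : {mpoly R[n]} := mcomp (s i) * 'X_i - mcomp (r i).
Definition FF : {mpoly R[n]} := mcomp q ^+ 2 + \sum_(i < n | (0 < i)%N) Bt i ^+ 2.
Definition Bv x i := (s i).[lam x] * x ord0 i - (r i).[lam x].
Definition Dv x := 2 * q.[lam x] * q^`().[lam x] +
  \sum_(i < n | (0 < i)%N) 2 * Bv x i * ((s i)^`().[lam x] * x ord0 i - (r i)^`().[lam x]).

Lemma peval_Bt x i : peval (Bt i) x = Bv x i.
Proof. by rewrite /Bt pevalB pevalM !peval_comp pevalXi. Qed.

Lemma peval_FF x : peval FF x = q.[lam x] ^+ 2 + \sum_(i < n | (0 < i)%N) Bv x i ^+ 2.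
Proof.
rewrite /FF pevalD pevalX2 peval_comp peval_sum; congr (_ + _).
by apply: eq_bigr => i _; rewrite pevalX2 peval_Bt.
Qed.

Lemma dv_Bt x i j : dv x j (Bt i) =
  (s i)^`().[lam x] * c ^+ j * x ord0 i + (s i).[lam x] * (i == j)%:R
  - (r i)^`().[lam x] * c ^+ j.
Proof. by rewrite /Bt dvB dvM !dv_comp dvXi peval_comp pevalXi. Qed.

Lemma dv_FF x j : dv x j FF = c ^+ j * Dv x +
   (if (0 < j)%N then 2 * Bv x j * (s j).[lam x] else 0).
Proof.
rewrite /FF dvD dvX2 dv_comp peval_comp dv_sum /Dv mulrDr.
have -> : \sum_(i < n | (0 < i)%N) dv x j (Bt i ^+ 2) =
   \sum_(i < n | (0 < i)%N) (c ^+ j * (2 * Bv x i * ((s i)^`().[lam x] * x ord0 i - (r i)^`().[lam x]))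
     + 2 * Bv x i * (s i).[lam x] * (i == j)%:R).
  by apply: eq_bigr => i _; rewrite dvX2 dv_Bt peval_Bt; ring.
rewrite big_split /= -mulr_sumr -addrA; congr (_ + _); first ring.
congr (_ + _).
case: ifP => hj.
  rewrite (bigD1 j) //= eqxx mulr1 big1 ?addr0 // => i /andP[_ /negPf ->].
  by rewrite mulr0.
by rewrite big1 // => i hi; case: eqP => [e|_]; [rewrite e hj in hi|rewrite mulr0].
Qed.
End Grad.


Section Crit.
Variables (R : realType) (n : nat) (c : R) (q : {poly R}) (s r : 'I_n -> {poly R}).
Variable i1 : 'I_n.
Hypothesis hi1 : val i1 = 1%N.
Hypothesis hs : forall i, i != i1 -> s i = 1.
Hypothesis hs1 : s i1 = q^`() ^+ 2.
Hypothesis hr : forall z, q^`().[z] = 0 -> (r i1).[z] != 0 /\ (r i1)^`().[z] != 0.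

Lemma crit x : (forall j, dv x j (FF c q s r) = 0) ->
  q.[lam c x] = 0 /\ forall i : 'I_n, (0 < i)%N -> Bv c s r x i = 0.
Proof.
move=> hd.
have i0lt : (0 < n)%N by apply: leq_ltn_trans (ltn_ord i1).
pose i0 : 'I_n := Ordinal i0lt.
have hD : Dv c q s r x = 0.
  by have := hd i0; rewrite dv_FF /= expr0 mul1r addr0.
have hB : forall j : 'I_n, (0 < j)%N -> Bv c s r x j * (s j).[lam c x] = 0.
  move=> j hj; have := hd j; rewrite dv_FF hD mulr0 add0r hj => /eqP.
  by rewrite -mulrA mulf_eq0 pnatr_eq0 /= => /eqP.
have hB2 : forall j : 'I_n, (0 < j)%N -> j != i1 -> Bv c s r x j = 0.
  by move=> j hj hji; have := hB j hj; rewrite hs // hornerC mulr1.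
have i1pos : (0 < i1)%N by rewrite hi1.
have hDe : Dv c q s r x = 2 * q.[lam c x] * q^`().[lam c x] +
   2 * Bv c s r x i1 * ((s i1)^`().[lam c x] * x ord0 i1 - (r i1)^`().[lam c x]).
  rewrite /Dv (bigD1 i1) //= big1 ?addr0 // => j /andP[hj hji].
  by rewrite hB2 // !mulr0 mul0r.
set u := lam c x in hD hDe hB *.
have [hq1|hq1] := eqVneq q^`().[u] 0.
  exfalso.
  have hsu : (s i1).[u] = 0 by rewrite hs1 horner_exp hq1 expr0n.
  have hsd : (s i1)^`().[u] = 0.
    by rewrite hs1 expr2 derivM hornerD !hornerM hq1 !mul0r mulr0 addr0.
  have hBv : Bv c s r x i1 = - (r i1).[u] by rewrite /Bv -/u hsu mul0r sub0r.
  move: hDe; rewrite hD hq1 mulr0 add0r hsd mul0r sub0r hBv.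
  have [h1 h2] := hr hq1.
  move/eqP; rewrite eq_sym -mulrA mulf_eq0 pnatr_eq0 /= mulrN mulNr opprK.
  by rewrite mulf_eq0 (negPf h1) (negPf h2).
have hsu : (s i1).[u] != 0 by rewrite hs1 horner_exp expf_neq0.
have hBi1 : Bv c s r x i1 = 0.
  by have /eqP := hB i1 i1pos; rewrite mulf_eq0 (negPf hsu) orbF => /eqP.
split.
  move: hDe; rewrite hD hBi1 mulr0 mul0r addr0 => /eqP; rewrite eq_sym.
  by rewrite -mulrA mulf_eq0 pnatr_eq0 /= mulf_eq0 (negPf hq1) orbF => /eqP.
by move=> i hi; case: (eqVneq i i1) => [->//|]; apply: hB2.
Qed.
End Crit.


Section Aux.
Variable R : realType.

Lemma notin_seq (l : seq R) : exists x, x \notin l.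
Proof.
suff [x hx] : exists x, forall y, y \in l -> y < x.
  by exists x; apply/negP => /hx; rewrite ltxx.
elim: l => [|a l [x hx]]; first by exists 0.
exists (Num.max x (a + 1)) => y; rewrite inE => /orP[/eqP ->|/hx h].
  by rewrite lt_max; apply/orP; right; rewrite ltrDl ltr01.
by rewrite lt_max h.
Qed.

Lemma root_in_rootsR (p : {poly R}) z : p != 0 -> root p z -> z \in rootsR p.
Proof. by move=> p0 hz; rewrite -(roots_on_rootsR p0) hz andbT. Qed.

Lemma nonroot (p : {poly R}) : p != 0 -> exists x, ~~ root p x.
Proof.
move=> p0; have [x hx] := notin_seq (rootsR p); exists x.
by apply: contra hx; apply: root_in_rootsR.
Qed.

Lemma avoid (a b y : R) : b != 0 -> y != - a / b -> a + b * y != 0.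
Proof.
move=> hb hy; apply: contra hy; rewrite addr_eq0 => /eqP h.
by rewrite h opprK mulrC mulKf.
Qed.

Lemma interp (T : eqType) (X : seq T) (g h : T -> R) :
  {in X &, injective g} -> exists L : {poly R}, forall a, a \in X -> L.[g a] = h a.
Proof.
elim: X => [|a X IH] hinj; first by exists 0.
have [L hL] : exists L : {poly R}, forall b, b \in X -> L.[g b] = h b.
  by apply: IH => x y hx hy; apply: hinj; rewrite inE ?hx ?hy orbT.
have [aX|aX] := boolP (a \in X).
  by exists L => b; rewrite inE => /orP[/eqP ->|]; apply: hL.
pose W := \prod_(b <- X) ('X - (g b)%:P).
have hW : W.[g a] != 0.
  rewrite /W horner_prod prodf_seq_neq0; apply/allP => b hb /=.
  rewrite hornerXsubC subr_eq0; apply/eqP => e.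
  have ab : a = b by apply: hinj; rewrite ?inE ?eqxx ?hb ?orbT.
  by rewrite ab hb in aX.
exists (L + ((h a - L.[g a]) / W.[g a]) *: W) => b; rewrite inE hornerD hornerZ.
case/orP => [/eqP ->|hb]; first by rewrite divfK // addrC subrK.
have -> : W.[g b] = 0 by rewrite /W horner_prod (big_rem b hb) /= hornerXsubC subrr mul0r.
by rewrite mulr0 addr0 hL.
Qed.

Lemma simple_root (T : seq R) z : uniq T -> z \in T ->
  (\prod_(t <- T) ('X - t%:P))^`().[z] != 0.
Proof.
move=> uT zT; rewrite (big_rem z zT) /= derivM derivXsubC mul1r hornerD hornerM.
rewrite hornerXsubC subrr mul0r addr0 horner_prod prodf_seq_neq0.
apply/allP => t ht /=; rewrite hornerXsubC subr_eq0; apply/eqP => e.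
by rewrite e mem_rem_uniqF in ht.
Qed.

End Aux.

Unset Implicit Arguments.

Theorem proposition1 (R : realType) (n : nat) (hn : (2 <= n)%N)
  (X : seq 'rV[R]_n) :
  exists P : {mpoly R[n]},
    (forall x, x \in X -> is_local_min P x) /\
    (forall x, is_critical P x -> x \in X).
Proof.
have i0lt : (0 < n)%N by apply: leq_trans hn.
pose i0 : 'I_n := Ordinal i0lt.
have [->|hX] := eqVneq X [::].
  exists 'X_i0; split => // x hc; have := hc i0.
  change (dv x i0 'X_i0 = 0 -> x \in [::]).
  by rewrite dvXi eqxx => /eqP; rewrite oner_eq0.
have [a0 a0X] : exists a0, a0 \in X by case: X hX => [//|a X' _]; exists a; rewrite inE eqxx.
pose pd (a b : 'rV[R]_n) : {poly R} := \sum_(i < n) (a ord0 i - b ord0 i) *: 'X^i.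
have pdE : forall c a b, lam c a - lam c b = (pd a b).[c].
  move=> c a b; rewrite horner_sum /lam -sumrB; apply: eq_bigr => i _.
  rewrite hornerZ hornerXn; ring.
have pd0 : forall a b, a != b -> pd a b != 0.
  move=> a b hab; apply: contra hab => /eqP h; apply/eqP/rowP => i.
  have := congr1 (fun p : {poly R} => p`_i) h.
  rewrite coef_sum coef0 (bigD1 i) //= big1 ?addr0.
    by rewrite coefZ coefXn eqxx mulr1 => /eqP; rewrite subr_eq0 => /eqP.
  move=> j hj; rewrite coefZ coefXn.
  by case: eqP => [e|]; [by rewrite (val_inj e) eqxx in hj|rewrite mulr0].
pose Q := \prod_(a <- X) \prod_(b <- X | a != b) pd a b.
have Q0 : Q != 0.
  rewrite prodf_seq_neq0; apply/allP => a _ /=; rewrite prodf_seq_neq0.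
  by apply/allP => b _ /=; apply/implyP; apply: pd0.
have [c hc] := nonroot Q0.
have linj : {in X &, injective (lam c)}.
  move=> a b ha hb e; apply/eqP; apply/negPn/negP => hab.
  move: hc; rewrite /root /Q horner_prod prodf_seq_neq0 => /allP /(_ a ha) /=.
  rewrite horner_prod prodf_seq_neq0 => /allP /(_ b hb) /=; rewrite hab /=.
  by rewrite -pdE e subrr eqxx.
pose T := undup (map (lam c) X).
have uT : uniq T := undup_uniq _.
pose q := \prod_(t <- T) ('X - t%:P).
have memT : forall z, z \in T -> exists2 a, a \in X & z = lam c a.
  by move=> z; rewrite mem_undup => /mapP.
have lamT : forall a, a \in X -> lam c a \in T.
  by move=> a ha; rewrite mem_undup map_f.
have rootq : forall z, (q.[z] == 0) = (z \in T).
  by move=> z; rewrite -root_prod_XsubC.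
have hsimple : forall z, z \in T -> q^`().[z] != 0 by move=> z; apply: simple_root.
have dq0 : q^`() != 0.
  rewrite -size_poly_gt0 polyorder.size_deriv size_prod_XsubC /=.
  rewrite lt0n size_eq0; apply/eqP => hT; have := lamT a0 a0X.
  by rewrite -/T hT.
pose i1 : 'I_n := Ordinal hn.
pose s i : {poly R} := if i == i1 then q^`() ^+ 2 else 1.
have := fun i => @interp R _ X (lam c) (fun a => (s i).[lam c a] * a ord0 i) linj.
move/(@fin_all_exists _ (fun _ => {poly R}) _) => [L hL].
pose zs := rootsR q^`().
have [d hd] := notin_seq [seq - (L i1)^`().[z] / q.[z] | z <- zs].
have [cc hcc] := notin_seq [seq - ((L i1).[z] + q.[z] * (d * z)) / q.[z] | z <- zs].
pose r1 := L i1 + q * (cc%:P + d *: 'X).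
pose r i : {poly R} := if i == i1 then r1 else L i.
have qnz : forall z, q^`().[z] = 0 -> q.[z] != 0.
  by move=> z hz; rewrite rootq; apply/negP => /hsimple; rewrite hz eqxx.
have hr : forall z, q^`().[z] = 0 -> (r i1).[z] != 0 /\ (r i1)^`().[z] != 0.
  move=> z hz; have zzs : z \in zs by apply: root_in_rootsR => //; apply/eqP.
  rewrite /r eqxx /r1; split.
    have -> : (L i1 + q * (cc%:P + d *: 'X)).[z] = 
        ((L i1).[z] + q.[z] * (d * z)) + q.[z] * cc.
      by rewrite hornerD hornerM hornerD hornerC hornerZ hornerX; ring.
    apply: avoid; first exact: qnz.
    by apply: contra hcc => /eqP ->; apply: map_f.
  have -> : (L i1 + q * (cc%:P + d *: 'X))^`().[z] = (L i1)^`().[z] + q.[z] * d.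
    rewrite derivD derivM derivD derivC derivZ derivX.
rewrite !(hornerD, hornerM, hornerC, hornerZ, hornerX, hz); ring.
  apply: avoid; first exact: qnz.
  by apply: contra hd => /eqP ->; apply: map_f.
exists (FF c q s r); split.
  move=> a ha; exists 1 => [|y _]; first exact: ltr01.
  rewrite !peval_FF.
  have -> : q.[lam c a] = 0 by apply/eqP; rewrite rootq lamT.
  rewrite big1 ?expr0n ?addr0 /=.
    by apply: addr_ge0; [exact: sqr_ge0|apply: sumr_ge0 => i _; exact: sqr_ge0].
  move=> i _; rewrite /Bv /r; case: eqP => [->|_].
    rewrite /r1 hornerD (hornerM q).
    have -> : q.[lam c a] = 0 by apply/eqP; rewrite rootq lamT.
    by rewrite mul0r addr0 hL // /s eqxx horner_exp subrr expr0n.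
  by rewrite hL // subrr expr0n.
move=> x hcx.
have hs : forall i, i != i1 -> s i = 1 by move=> i /negPf hi; rewrite /s hi.
have hs1 : s i1 = q^`() ^+ 2 by rewrite /s eqxx.
have [hq hB] := @crit R n c q s r i1 erefl hs hs1 hr x hcx.
have [a ha hxa] : exists2 a, a \in X & lam c x = lam c a.
  by apply: memT; rewrite -rootq hq eqxx.
have hsa : forall i, (s i).[lam c a] != 0.
  move=> i; case: (eqVneq i i1) => [->|hne]; last by rewrite hs // -polyC1 hornerC oner_eq0.
  by rewrite hs1 horner_exp expf_neq0 // hsimple // lamT.
have hxi : forall i : 'I_n, (0 < i)%N -> x ord0 i = a ord0 i.
  move=> i hi; have := hB i hi; rewrite /Bv hxa.
  have -> : (r i).[lam c a] = (s i).[lam c a] * a ord0 i.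
    rewrite /r; case: (eqVneq i i1) => [->|hne]; last exact: hL.
    rewrite /r1 hornerD (hornerM q).
    have -> : q.[lam c a] = 0 by apply/eqP; rewrite rootq lamT.
    by rewrite mul0r addr0 hL.
  by move/eqP; rewrite subr_eq0 => /eqP /(mulfI (hsa i)).
suff -> : x = a by [].
apply/rowP => i.
have [hi|hi] := posnP i; last exact: hxi.
move: hxa; rewrite /lam (bigD1 i) //= [X in _ = X -> _](bigD1 i) //=.
have -> : \sum_(j < n | j != i) c ^+ j * x ord0 j = \sum_(j < n | j != i) c ^+ j * a ord0 j.
  apply: eq_bigr => j hj; rewrite hxi // lt0n; apply: contra hj => /eqP e.
  by apply/eqP/val_inj; rewrite /= e hi.
by rewrite hi expr0 !mul1r => /addIr.
Qed.
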